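(* Let $n>0$ and let $u$ generate a cyclic group of $2$-power order $q\ge 2n$. If every Jordan block size of $u$ on $\wedge^2(V_{2n})$ has multiplicity at most $2$, then $n\in\{1,2,3,5\}$.
   Context: $K$ is an algebraically closed field of characteristic 2; $V_d$ is the $d$-dimensional indecomposable $K[u]$-module (one unipotent Jordan block of size $d$). *)

(* Defs.v *)
From HB Require Import structures.
From mathcomp Require Import all_boot all_order all_algebra.
Set Implicit Arguments. Unset Strict Implicit. Unset Printing Implicit Defensive.
Import GRing.Theory.
Local Open Scope ring_scope.

Definition jordan_unip (R : nzRingType) (m : nat) : 'M[R]_m :=
  \matrix_(i < m, j < m) (((i : nat) == j) || (j == i.+1 :> nat))%:R.

(* Index set of the standard basis e_i /\ e_j (i < j) of the exterior square. *)
Definition ext2_idx (m : nat) : finType := {x : 'I_m * 'I_m | (x.1 < x.2)%N}.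

(* Matrix of the induced map on /\^2 : e_k /\ e_l |-> A e_k /\ A e_l,
   coefficient on e_i /\ e_j is A_ik A_jl - A_il A_jk. *)
Definition ext2 (R : comNzRingType) (m : nat) (A : 'M[R]_m)
  : 'M[R]_#|ext2_idx m| :=
  \matrix_(a, b)
    let ij := val (enum_val a) in let kl := val (enum_val b) in
    A ij.1 kl.1 * A ij.2 kl.2 - A ij.1 kl.2 * A ij.2 kl.1.

Definition mxpow (R : nzRingType) (N : nat) (B : 'M[R]_N) (k : nat) : 'M[R]_N :=
  iter k (mulmx B) 1%:M.

(* Number of Jordan blocks of size at least d of a unipotent matrix A
   (= rank (A-1)^(d-1) - rank (A-1)^d), and of size exactly d. *)
Definition jblocks_ge (F : fieldType) (N : nat) (A : 'M[F]_N) (d : nat) : nat :=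
  (\rank (mxpow (A - 1%:M) d.-1) - \rank (mxpow (A - 1%:M) d))%N.

Definition jblock_mult (F : fieldType) (N : nat) (A : 'M[F]_N) (d : nat) : nat :=
  (jblocks_ge A d - jblocks_ge A d.+1)%N.

(* Main.v *)
Require Import Defs.
From HB Require Import structures.
From mathcomp Require Import all_boot all_order all_algebra.
From mathcomp Require Import zify.
Import GRing.Theory.
Local Open Scope ring_scope.

Lemma cancel9 (V : zmodType) (x2 : forall v : V, v + v = 0) (X Y Z U V' R : V) :
  (X+Y+Z) + (Y+U+V') + (Z+V'+R) = X+U+R.
Proof.
rewrite !addrA [LHS](ACl (1*5*9*(2*4)*(3*7)*(6*8)))%AC /=.
by rewrite !x2 !addr0.
Qed.

Lemma mxpowS (R : nzRingType) (n0 : nat) (B : 'M[R]_n0) k : mxpow B k.+1 = B *m mxpow B k.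
Proof. by []. Qed.

Lemma mxpowD (R : nzRingType) (n0 : nat) (B : 'M[R]_n0) a b :
  mxpow B (a + b) = mxpow B a *m mxpow B b.
Proof.
elim: a => [|a IH]; first by rewrite add0n /mxpow /= mul1mx.
by rewrite addSn !mxpowS IH mulmxA.
Qed.

Lemma piv_rank (F : fieldType) k n (X : 'M[F]_(k, n)) (piv : 'I_k -> 'I_n) :
  (forall i, X i (piv i) != 0) ->
  (forall i j : 'I_k, (j < i)%N -> X j (piv i) = 0) -> \rank X = k.
Proof.
move=> hd hz.
set S := X *m \matrix_(c, j) (c == piv j)%:R.
have Se i j : S i j = X i (piv j).
  rewrite mxE (bigD1 (piv j)) //= mxE eqxx mulr1 big1 ?addr0 //.
  by move=> c /negbTE hc; rewrite mxE hc mulr0.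
have tS : is_trig_mx S by apply/is_trig_mxP => i j hij; rewrite Se hz.
have uS : S \in unitmx.
  rewrite unitmxE det_trig // unitfE; apply/prodf_neq0 => i _.
  by rewrite Se hd.
apply/eqP; rewrite eqn_leq rank_leq_row /= -{1}(mxrank_unit uS).
exact: mxrankM_maxl.
Qed.

Lemma mxpow_mul (R : nzRingType) (n0 k0 : nat) (B : 'M[R]_n0) a b (v : 'M[R]_(n0, k0)) :
  mxpow B (a + b) *m v = mxpow B a *m (mxpow B b *m v).
Proof. by rewrite mxpowD mulmxA. Qed.

Ltac dec_eqs := repeat match goal with
 | |- context [(?a == ?b)] =>
   first [ rewrite (_ : (a == b) = true); last (by apply/eqP; lia)
         | rewrite (_ : (a == b) = false); last (by apply/eqP; lia) ] end.

Lemma natb_neq0 (F : fieldType) (c : bool) : c -> (c%:R : F) != 0.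
Proof. by move=> ->; rewrite oner_neq0. Qed.
Lemma natb_eq0 (F : fieldType) (c : bool) : c = false -> (c%:R : F) = 0.
Proof. by move=> ->. Qed.

Lemma boolfact (x y i j : nat) : (x < y)%N -> (0 < i)%N -> (i < j)%N ->
  odd ((((x.+1 == i) && (y.+1 == j)) || ((x.+1 == j) && (y.+1 == i))) +
       (((x.+1 == i.-1) && (y.+1 == j)) || ((x.+1 == j) && (y.+1 == i.-1))) +
       (((x.+1 == i) && (y.+1 == j.-1)) || ((x.+1 == j.-1) && (y.+1 == i))) +
       (((x.+1 == i.-1) && (y.+1 == j.-1)) || ((x.+1 == j.-1) && (y.+1 == i.-1))))%N
  = ((x == i.-1) || (i.-1 == x.+1)) && ((y == j.-1) || (j.-1 == y.+1)).
Proof.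
move=> hxy hi hij.
case: i hi hij => // i _ hij; case: j hij => // j hij /=.
repeat (case: eqP => ? /=); try done; lia.
Qed.

Section S.
Variable K : fieldType.
Hypothesis hK : (2%:R : K) = 0.

Lemma natr_odd (k : nat) : (k%:R : K) = (odd k)%:R.
Proof.
rewrite -{1}(odd_double_half k) natrD -muln2 natrM hK mulr0 addr0.
by case: (odd k).
Qed.

Lemma addrr (V : zmodType) (x : V) : (1 + 1 : K) = 0 -> x + x = x + x.
Proof. by []. Qed.

Variable m : nat.
Local Notation N := #|ext2_idx m|.
Definition pr1 (b : 'I_N) : nat := ((val (enum_val b)).1 : nat).
Definition pr2 (b : 'I_N) : nat := ((val (enum_val b)).2 : nat).

Lemma pr12 b : (pr1 b < pr2 b)%N.
Proof. exact: (valP (enum_val b)). Qed.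
Lemma pr2m b : (pr2 b < m)%N.
Proof. exact: ltn_ord. Qed.

Definition mW (b : 'I_N) (i j : nat) : bool :=
  ((pr1 b).+1 == i) && ((pr2 b).+1 == j) || ((pr1 b).+1 == j) && ((pr2 b).+1 == i).

Definition W (i j : nat) : 'cV[K]_N := \col_b (mW b i j)%:R.

Lemma WC i j : W i j = W j i.
Proof. by apply/matrixP => b z; rewrite !mxE /mW orbC. Qed.

Lemma W0l j : W 0 j = 0.
Proof. by apply/matrixP => b z; rewrite !mxE /mW !andbF. Qed.

Lemma Wdiag i : W i i = 0.
Proof.
apply/matrixP => b z; rewrite !mxE /mW.
have := pr12 b; move: (pr1 b) (pr2 b) => x y h.
by repeat (case: eqP => ? /=); first [done | exfalso; lia].
Qed.

Lemma Wout i j : (m < j)%N -> W i j = 0.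
Proof.
move=> hj; apply/matrixP => b z; rewrite !mxE /mW.
have := pr12 b; have := pr2m b; move: (pr1 b) (pr2 b) => x y h1 h2.
by repeat (case: eqP => ? /=); first [done | exfalso; lia].
Qed.


Lemma addxx (n1 n2 : nat) (x : 'M[K]_(n1, n2)) : x + x = 0.
Proof. have h2 : (1 + 1 : K) = 0 by rewrite -hK. by rewrite -[x]scale1r -scalerDl h2 scale0r. Qed.

Lemma W_delta b : W (pr1 b).+1 (pr2 b).+1 = \col_c (c == b)%:R.
Proof.
apply/matrixP => c z; rewrite !mxE /mW !eqSS.
have := pr12 b; have := pr12 c => h1 h2.
have -> : ((pr1 c == pr2 b) && (pr2 c == pr1 b)) = false.
  by apply/negbTE/negP => /andP[/eqP e1 /eqP e2]; lia.
rewrite orbF; suff -> : ((pr1 c == pr1 b) && (pr2 c == pr2 b)) = (c == b) by [].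
apply/idP/eqP => [/andP[/eqP e1 /eqP e2]|->]; last by rewrite !eqxx.
apply: enum_val_inj; apply: val_inj.
move: e1 e2; rewrite /pr1 /pr2; case: (val (enum_val c)) => x1 x2; case: (val (enum_val b)) => y1 y2 /= e1 e2.
by congr pair; apply: val_inj.
Qed.

Definition idxW (i j : nat) (hij : (i < j)%N) (hj : (j < m)%N) : 'I_N :=
  enum_rank (exist (fun x : 'I_m * 'I_m => (x.1 < x.2)%N)
    (Ordinal (@ltn_trans _ _ _ hij hj), Ordinal hj) hij : ext2_idx m).

Lemma idxW_pr i j hij hj : pr1 (@idxW i j hij hj) = i /\ pr2 (@idxW i j hij hj) = j.
Proof. by rewrite /pr1 /pr2 /idxW enum_rankK. Qed.

Lemma W_idx i j hij hj : W i.+1 j.+1 = \col_c (c == @idxW i j hij hj)%:R.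
Proof. by rewrite -W_delta; case: (idxW_pr _ _ hij hj) => -> ->. Qed.


Local Notation A := (ext2 (jordan_unip K m)).

Lemma A_entry a b : A a b =
  (((pr1 a == pr1 b) || (pr1 b == (pr1 a).+1)) && ((pr2 a == pr2 b) || (pr2 b == (pr2 a).+1)))%:R
  - (((pr1 a == pr2 b) || (pr2 b == (pr1 a).+1)) && ((pr2 a == pr1 b) || (pr1 b == (pr2 a).+1)))%:R.
Proof. by rewrite !mxE /jordan_unip !mxE -!natrM !mulnb. Qed.

Lemma AW i j : (i <= m)%N -> (j <= m)%N ->
  A *m W i j = W i j + W i.-1 j + W i j.-1 + W i.-1 j.-1.
Proof.
move=> hi hj.
wlog hij : i j hi hj / (i <= j)%N.
  move=> H; case: (leqP i j) => h; first exact: H.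
  rewrite WC H // 1?ltnW // (WC i.-1) (WC i) (WC i.-1 j.-1) (WC j.-1 i) (WC j i.-1).
  by congr (_ + _); rewrite addrAC.
case: (eqVneq i j) => [<-|ne].
  by rewrite !Wdiag mulmx0 addr0 (WC i i.-1) add0r addxx.
case: i hi hij ne => [|i] hi hij ne; first by rewrite !W0l mulmx0 !addr0.
case: j hj hij ne => [|j] hj hij ne; first by [].
have hij' : (i < j)%N by rewrite ltn_neqAle -eqSS ne.
have hj' : (j < m)%N by [].
rewrite [in LHS](W_idx _ _ hij' hj'); case: (idxW_pr _ _ hij' hj') => e1 e2.
apply/matrixP => a z; rewrite !mxE.
rewrite (bigD1 (idxW _ _ hij' hj')) //= mxE eqxx mulr1 big1 ?addr0; last first.
  by move=> c /negbTE hc; rewrite mxE hc mulr0.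
rewrite A_entry e1 e2 /mW -!natrD natr_odd.
have := pr12 a; move: (pr1 a) (pr2 a) => x y hxy.
have -> : ((x == j) || (j == x.+1)) && ((y == i) || (i == y.+1)) = false.
  by apply/negbTE/negP => /andP[/orP[/eqP|/eqP] ? /orP[/eqP|/eqP] ?]; lia.
rewrite subr0 -(boolfact x y i.+1 j.+1 hxy (ltn0Sn i) hij') /=.
done.
Qed.


Local Notation B := (A - 1%:M).

Lemma BW i j : (i <= m)%N -> (j <= m)%N ->
  B *m W i j = W i.-1 j + W i j.-1 + W i.-1 j.-1.
Proof.
move=> hi hj; rewrite mulmxBl mul1mx AW //.
by rewrite -!addrA addrC -!addrA addNr addr0.
Qed.

Lemma DW t i j : (i <= m)%N -> (j <= m)%N ->
  mxpow B (2 ^ t) *m W i j = W (i - 2 ^ t) j + W i (j - 2 ^ t) + W (i - 2 ^ t) (j - 2 ^ t).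
Proof.
elim: t i j => [|t IH] i j hi hj.
  by rewrite expn0 mxpowS /mxpow /= mulmx1 !subn1 BW.
have hi' : (i - 2 ^ t <= m)%N by apply: leq_trans (leq_subr _ _) hi.
have hj' : (j - 2 ^ t <= m)%N by apply: leq_trans (leq_subr _ _) hj.
rewrite expnS mul2n -addnn mxpowD -mulmxA IH // !mulmxDr !IH //.
rewrite !subnDA; apply: cancel9; exact: addxx.
Qed.


Lemma Tsplit t : mxpow B (2 ^ t.+1 - 1) = mxpow B (2 ^ t - 1) *m mxpow B (2 ^ t).
Proof.
rewrite -mxpowD; congr (mxpow B _).
have := expn_gt0 2 t; rewrite expnS; lia.
Qed.

Lemma Trec t a b : (3 <= t)%N -> (a <= 8)%N -> (2 ^ t + b <= m)%N ->
  mxpow B (2 ^ t - 1) *m W a (2 ^ t + b) = mxpow B 7 *m W a (8 + b).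
Proof.
elim: t => [|t IH] // ht ha hm.
have [e|ne] := eqVneq t 2; first by subst.
have ht' : (3 <= t)%N by lia.
have h8 : (8 <= 2 ^ t)%N by rewrite -[8%N]/(2 ^ 3)%N leq_pexp2l.
have h2 : (2 ^ t.+1 = 2 ^ t + 2 ^ t)%N by rewrite expnS mul2n addnn.
rewrite Tsplit -mulmxA DW; last 2 first.
- by apply: leq_trans hm; rewrite h2; lia.
- by [].
have -> : (a - 2 ^ t = 0)%N by apply/eqP; rewrite subn_eq0; lia.
rewrite !W0l add0r addr0.
have -> : (2 ^ t.+1 + b - 2 ^ t = 2 ^ t + b)%N by rewrite h2; lia.
apply: IH => //; try lia.
all: by apply: leq_trans hm; rewrite h2; lia.
Qed.

Lemma Tkill s a b : (a <= 2 ^ s)%N -> (b <= 2 ^ s)%N -> (a <= m)%N -> (b <= m)%N ->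
  mxpow B (2 ^ s.+1 - 1) *m W a b = 0.
Proof.
move=> ha hb ham hbm; rewrite Tsplit -mulmxA DW //.
have -> : (a - 2 ^ s = 0)%N by apply/eqP; rewrite subn_eq0.
have -> : (b - 2 ^ s = 0)%N by apply/eqP; rewrite subn_eq0.
by rewrite !W0l (WC a) W0l !addr0 mulmx0.
Qed.

Lemma Ttop s a b : (2 ^ s + a <= m)%N -> (2 ^ s + b <= m)%N ->
  mxpow B (2 ^ s.+1 - 1) *m W (2 ^ s + a) (2 ^ s + b) =
  mxpow B (2 ^ s - 1) *m W a (2 ^ s + b) + mxpow B (2 ^ s - 1) *m W (2 ^ s + a) b
  + mxpow B (2 ^ s - 1) *m W a b.
Proof.
move=> ha hb; rewrite Tsplit -mulmxA DW // !addKn !mulmxDr.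
by [].
Qed.

Definition interp (s : seq (nat * nat)) : 'cV[K]_N := \sum_(x <- s) W x.1 x.2.

Definition dstep (p : nat) (s : seq (nat * nat)) : seq (nat * nat) :=
  flatten [seq [:: ((x.1 - p)%N, x.2); (x.1, (x.2 - p)%N); ((x.1 - p)%N, (x.2 - p)%N)] | x <- s].

Definition T8l (x y : nat) := dstep 1 (dstep 2 (dstep 4 [:: (x, y)])).

Definition okl (s : seq (nat * nat)) := all (fun x => (x.1 <= m) && (x.2 <= m))%N s.

Lemma okl_dstep p s : okl s -> okl (dstep p s).
Proof.
elim: s => [|x s IH] //= /andP[/andP[h1 h2] hs].
rewrite /= h1 h2 !(leq_trans (leq_subr _ _)) //=; exact: IH.
Qed.

Lemma interp_cons x s : interp (x :: s) = W x.1 x.2 + interp s.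
Proof. by rewrite /interp big_cons. Qed.

Lemma interp_cat s1 s2 : interp (s1 ++ s2) = interp s1 + interp s2.
Proof. by rewrite /interp big_cat. Qed.

Lemma D_interp t s : okl s -> mxpow B (2 ^ t) *m interp s = interp (dstep (2 ^ t) s).
Proof.
elim: s => [|x s IH] /=; first by rewrite /interp !big_nil mulmx0.
case/andP=> /andP[h1 h2] hs.
rewrite interp_cons mulmxDr IH // DW // interp_cat !interp_cons /interp big_nil.
by rewrite !addr0 !addrA.
Qed.

Lemma T8_interp s : okl s ->
  mxpow B 7 *m interp s = interp (dstep 1 (dstep 2 (dstep 4 s))).
Proof.
move=> hs.
rewrite (_ : 7 = 2 ^ 0 + (2 ^ 1 + 2 ^ 2))%N // !mxpow_mul (D_interp 2) // (D_interp 1) ?okl_dstep // (D_interp 0) //.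
by do 2 apply: okl_dstep.
Qed.

Definition mWn (k l i j : nat) : bool :=
  ((k.+1 == i) && (l.+1 == j)) || ((k.+1 == j) && (l.+1 == i)).

Lemma interp_coord s b :
  interp s b 0 = (odd (count (fun x => mWn (pr1 b) (pr2 b) x.1 x.2) s))%:R.
Proof.
rewrite -natr_odd; elim: s => [|x s IH]; first by rewrite /interp big_nil mxE.
by rewrite interp_cons mxE IH /= natrD mxE.
Qed.


Definition rowsmx k (f : nat -> 'cV[K]_N) : 'M[K]_(k, N) := \matrix_(i < k, c < N) (f i) c 0.

Lemma rowsmx_mulT k f (M : 'M[K]_N) i b : (rowsmx k f *m M^T) i b = (M *m f i) b 0.
Proof. by rewrite !mxE; apply: eq_bigr => c _; rewrite !mxE mulrC. Qed.

Lemma rowsmx_T0 k f (M : 'M[K]_N) :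
  (forall i, (i < k)%N -> M *m f i = 0) -> M *m (rowsmx k f)^T = 0.
Proof.
move=> H; apply/matrixP => b i.
have E := congr1 (fun v : 'cV_N => v b 0) (H i (ltn_ord i)); rewrite /= !mxE in E.
rewrite [RHS]mxE -E mxE; apply: eq_bigr => c _; rewrite !mxE.
done.
Qed.

Lemma ge_lower d k f : (0 < d)%N -> (forall i, (i < k)%N -> mxpow B d *m f i = 0) ->
  (\rank (rowsmx k f *m (mxpow B d.-1)^T) <= jblocks_ge A d)%N.
Proof.
case: d => // d _ H; rewrite /jblocks_ge [d.+1.-1]/= mxpowS.
set Y := (mxpow B d)^T.
rewrite -(mxrank_tr (B *m _)) trmx_mul -(mxrank_tr (mxpow B d)) -/Y.
rewrite -(mxrank_mul_ker Y B^T) addKn.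
apply: mxrankS; rewrite sub_capmx submxMl /=; apply/sub_kermxP.
rewrite -mulmxA /Y -trmx_mul -mxpowS.
have := rowsmx_T0 _ _ _ H => /(congr1 trmx); rewrite trmx_mul trmxK trmx0 => ->.
done.
Qed.

Lemma ge_upper d k (Wm : 'M[K]_(k, N)) : (0 < d)%N -> ((mxpow B d.-1)^T <= Wm)%MS ->
  (jblocks_ge A d <= \rank Wm - \rank (Wm *m B^T))%N.
Proof.
case: d => // d _ H; rewrite /jblocks_ge [d.+1.-1]/= mxpowS.
set Y := (mxpow B d)^T.
rewrite -(mxrank_tr (B *m _)) trmx_mul -(mxrank_tr (mxpow B d)) -/Y.
rewrite -(mxrank_mul_ker Y B^T) addKn -(mxrank_mul_ker Wm B^T) addKn.
by apply: mxrankS; apply: capmxS.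
Qed.

Lemma mx_eq0_W (M : 'M[K]_N) : (forall b, M *m W (pr1 b).+1 (pr2 b).+1 = 0) -> M = 0.
Proof.
move=> H; apply/matrixP => x b; have := congr1 (fun v : 'cV_N => v x 0) (H b).
rewrite W_delta !mxE (bigD1 b) //= mxE eqxx mulr1 big1 ?addr0 //.
by move=> c /negbTE hc; rewrite mxE hc mulr0.
Qed.

Lemma col_W (M : 'M[K]_N) b : (row b M^T) = (M *m W (pr1 b).+1 (pr2 b).+1)^T.
Proof.
apply/matrixP => z x; rewrite W_delta !mxE (bigD1 b) //= mxE eqxx mulr1 big1 ?addr0 //.
by move=> c /negbTE hc; rewrite mxE hc mulr0.
Qed.

Definition idxn (d : 'I_N) (k l : nat) : 'I_N :=
  odflt d [pick b | (pr1 b == k) && (pr2 b == l)].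

Lemma idxn_pr d k l : (k < l)%N -> (l < m)%N -> pr1 (idxn d k l) = k /\ pr2 (idxn d k l) = l.
Proof.
move=> hkl hl; rewrite /idxn; case: pickP => [b /andP[/eqP -> /eqP ->] //|H].
by case: (idxW_pr _ _ hkl hl) => e1 e2; have := H (idxW _ _ hkl hl); rewrite e1 e2 !eqxx.
Qed.

Lemma coord_idxn s d k l : (k < l)%N -> (l < m)%N ->
  interp s (idxn d k l) 0 = (odd (count (fun x => mWn k l x.1 x.2) s))%:R.
Proof. by move=> hkl hl; rewrite interp_coord; case: (idxn_pr d _ _ hkl hl) => -> ->. Qed.


Lemma interp1 x y : interp [:: (x, y)] = W x y.
Proof. by rewrite interp_cons /interp big_nil addr0. Qed.

Lemma rowsmx_row k f (i : 'I_k) : row i (rowsmx k f) = (f i)^T.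
Proof. by apply/rowP => c; rewrite !mxE. Qed.

Lemma B_interp s : okl s -> B *m interp s = interp (dstep 1 s).
Proof. by move=> hs; rewrite -(D_interp 0) // /mxpow /= mulmx1. Qed.

Section CaseB.
Variables (s h : nat).
Hypothesis hs : h = (2 ^ s)%N.
Hypothesis h4 : (4 <= h)%N.
Hypothesis hm : m = (h + 2)%N.

Definition wl (i : nat) : seq (nat * nat) :=
  if (i < h - 2)%N then [:: (1, i + 3)%N]
  else if (i < 2 * h - 5)%N then [:: (2, i + 6 - h)%N]
  else [:: (1, h + 2); (h + 1, 2); (1, 2)]%N.

Definition wv (i : nat) : 'cV[K]_N :=
  if (i < 2 * h - 4)%N then interp (wl i) else if i == (2 * h - 4)%N then W 1 2 else W 2 3.

Definition Wm := rowsmx (2 * h - 2) wv.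
Definition Wmain := rowsmx (2 * h - 4) (fun i => interp (wl i)).

Lemma wv_sub i : (i < 2 * h - 2)%N -> ((wv i)^T <= Wm)%MS.
Proof. by move=> hi; rewrite -(rowsmx_row _ wv (Ordinal hi)) row_sub. Qed.

Lemma caseB_sub : ((mxpow B h)^T <= Wm)%MS.
Proof.
apply/row_subP => b; rewrite col_W.
have hkl := pr12 b; have hl := pr2m b.
move: (pr1 b) (pr2 b) hkl hl => k l hkl hl.
rewrite [in mxpow B h]hs (DW s); try lia; rewrite -hs.
case: (leqP l.+1 h) => h1.
  have -> : (l.+1 - h = 0)%N by lia.
  have -> : (k.+1 - h = 0)%N by lia.
  by rewrite !W0l (WC _ 0) W0l !addr0 trmx0 sub0mx.
case: (leqP k.+1 h) => h2.
  have -> : (k.+1 - h = 0)%N by lia.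
  rewrite !W0l add0r addr0.
  have [e|e] : (l.+1 - h = 1 \/ l.+1 - h = 2)%N by lia.
  - rewrite e; case: k hkl h2 => [|[|k]] hkl h2.
    + by rewrite Wdiag trmx0 sub0mx.
    + have := @wv_sub (2 * h - 4) ltac:(lia); rewrite /wv ltnn eqxx WC; done.
    + have := @wv_sub k ltac:(lia); rewrite /wv /wl.
      have -> : (k < 2 * h - 4)%N by lia.
      have -> : (k < h - 2)%N by lia.
      by rewrite interp1 WC (_ : (k + 3 = k.+3)%N) //; lia.
  - rewrite e; case: k hkl h2 => [|[|[|k]]] hkl h2.
    + have := @wv_sub (2 * h - 4) ltac:(lia); rewrite /wv ltnn eqxx; done.
    + by rewrite Wdiag trmx0 sub0mx.
    + have := @wv_sub (2 * h - 3) ltac:(lia); rewrite /wv.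
      have -> : (2 * h - 3 < 2 * h - 4)%N = false by apply/negbTE; lia.
      have -> : (2 * h - 3 == 2 * h - 4)%N = false by apply/eqP; lia.
      by rewrite WC.
    + have := @wv_sub (k + h - 2) ltac:(lia); rewrite /wv /wl.
      have -> : (k + h - 2 < 2 * h - 4)%N by lia.
      have -> : (k + h - 2 < h - 2)%N = false by apply/negbTE; lia.
      have -> : (k + h - 2 < 2 * h - 5)%N by lia.
      by rewrite interp1 WC (_ : (k + h - 2 + 6 - h = k.+4)%N) //; lia.
have ek : (k.+1 = h + 1)%N by lia.
have el : (l.+1 = h + 2)%N by lia.
rewrite ek el !addKn.
have := @wv_sub (2 * h - 5) ltac:(lia); rewrite /wv /wl.
have -> : (2 * h - 5 < 2 * h - 4)%N by lia.
have -> : (2 * h - 5 < h - 2)%N = false by apply/negbTE; lia.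
have -> : (2 * h - 5 < 2 * h - 5)%N = false by rewrite ltnn.
by rewrite !interp_cons /interp big_nil addr0 addrA (WC (h + 1)).
Qed.


Lemma okl_wl i : okl (wl i).
Proof. rewrite /wl /okl; case: ifP => h1; [|case: ifP => h2] => /=; lia. Qed.

Lemma Wmain_sub : (Wmain *m B^T <= Wm *m B^T)%MS.
Proof.
apply: submxMr; apply/row_subP => i; rewrite rowsmx_row.
have hi : (i < 2 * h - 2)%N by have := ltn_ord i; lia.
by have := wv_sub _ hi; rewrite /wv ltn_ord.
Qed.

Lemma Wmain_rank : \rank (Wmain *m B^T) = (2 * h - 4)%N.
Proof.
have h1m : (1 < m)%N by lia.
pose d0 := idxW 0 1 (ltn0Sn 0) h1m.
pose piv (i : 'I_(2 * h - 4)) := if (i < h - 2)%N then idxn d0 0 i.+1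
  else if (i < 2 * h - 5)%N then idxn d0 1 (i + 4 - h) else idxn d0 1 (h - 1).
apply: (@piv_rank _ _ _ _ piv).
- move=> i; rewrite rowsmx_mulT B_interp ?okl_wl // /piv.
  have := ltn_ord i; move: (nat_of_ord i) => i' hi.
  rewrite /wl; case: (ltnP i' (h - 2)) => h1; [|case: (ltnP i' (2 * h - 5)) => h2];
    rewrite coord_idxn; try lia; rewrite /= /mWn; dec_eqs; by rewrite /= oner_neq0.
- move=> i j hji; rewrite rowsmx_mulT B_interp ?okl_wl // /piv.
  have := ltn_ord i; have := ltn_ord j; move: (nat_of_ord i) (nat_of_ord j) hji => i' j' hji hj hi.
  rewrite /wl; case: (ltnP i' (h - 2)) => h1; [|case: (ltnP i' (2 * h - 5)) => h2];
    case: (ltnP j' (h - 2)) => h3; try case: (ltnP j' (2 * h - 5)) => h4';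
    rewrite coord_idxn; try lia; rewrite /= /mWn; dec_eqs; by rewrite ?andbF.
Qed.


Lemma caseB_upper : (jblocks_ge A h.+1 <= 2)%N.
Proof.
have := @ge_upper h.+1 _ Wm (ltn0Sn _) caseB_sub.
have := rank_leq_row Wm.
have : (\rank (Wmain *m B^T) <= \rank (Wm *m B^T))%N by apply: mxrankS; exact: Wmain_sub.
rewrite Wmain_rank; lia.
Qed.

End CaseB.


Lemma T8W x y : (x <= m)%N -> (y <= m)%N -> mxpow B 7 *m W x y = interp (T8l x y).
Proof. by move=> hx hy; rewrite -interp1 T8_interp //= hx hy. Qed.

Lemma vec_gen t a b : (3 <= t)%N -> (a <= 8)%N -> (b <= 8)%N -> (2 ^ t + a <= m)%N ->
  (2 ^ t + b <= m)%N -> (8 + a <= m)%N -> (8 + b <= m)%N ->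
  mxpow B (2 ^ t.+1 - 1) *m W (2 ^ t + a) (2 ^ t + b) =
  interp (T8l a (8 + b) ++ T8l b (8 + a) ++ (if t == 3 then T8l a b else [::])).
Proof.
move=> ht ha hb hma hmb hma' hmb'.
have h8 : (8 <= 2 ^ t)%N by rewrite -[8%N]/(2 ^ 3)%N leq_pexp2l.
rewrite Ttop; try lia.
rewrite Trec; try lia. rewrite (WC (2 ^ t + a) b) Trec; try lia.
rewrite !T8W; try lia.
rewrite (interp_cat (T8l a (8 + b))) (interp_cat (T8l b (8 + a))) addrA; congr (_ + _).
case: (eqVneq t 3) => [->|ne]; first by rewrite T8W //; lia.
case: t ht h8 hma hmb ne => [|t] // ht h8 hma hmb ne.
rewrite Tkill ?interp_nil //; try lia.
- by rewrite /interp big_nil.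
- have : (2 ^ 3 <= 2 ^ t)%N by rewrite leq_pexp2l //; lia.
  by rewrite expnS in h8 *; lia.
- have : (2 ^ 3 <= 2 ^ t)%N by rewrite leq_pexp2l //; lia.
  by rewrite expnS in h8 *; lia.
Qed.


Definition Lc (c : bool) (j : nat) :=
  T8l j.+1 (8 + j.+2) ++ T8l j.+2 (8 + j.+1) ++ (if c then T8l j.+1 j.+2 else [::]).

Definition check (L : nat -> seq (nat * nat)) (k : nat) :=
  all (fun i => all (fun j => odd (count (fun x => mWn i i.+1 x.1 x.2) (L j)) == (i == j))
     (iota 0 i.+1)) (iota 0 k).

Lemma checkP L k : check L k -> forall i j, (j <= i)%N -> (i < k)%N ->
  odd (count (fun x => mWn i i.+1 x.1 x.2) (L j)) = (i == j).
Proof.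
move=> /allP H i j hji hik; have := H i; rewrite mem_iota add0n => /(_ hik) /allP /(_ j).
by rewrite mem_iota add0n ltnS => /(_ hji) /eqP.
Qed.

Lemma lower_piv k (L : nat -> seq (nat * nat)) (f : nat -> 'cV[K]_N) (T : 'M[K]_N) :
  (k.+1 < m)%N -> check L k -> (forall i, (i < k)%N -> T *m f i = interp (L i)) ->
  \rank (rowsmx k f *m T^T) = k.
Proof.
move=> hk hc hT.
have h1m : (1 < m)%N by lia.
pose d0 := idxW 0 1 (ltn0Sn 0) h1m.
apply: (@piv_rank _ _ _ _ (fun i : 'I_k => idxn d0 i i.+1)).
- move=> i; rewrite rowsmx_mulT hT // coord_idxn //; last by have := ltn_ord i; lia.
  by rewrite (checkP _ _ hc) // eqxx oner_neq0.
- move=> i j hji; rewrite rowsmx_mulT hT // coord_idxn //; last by have := ltn_ord i; lia.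
  rewrite (checkP _ _ hc) //; first by rewrite (gtn_eqF hji).
  exact: ltnW.
Qed.

Lemma lower_gen t k d : (3 <= t)%N -> (k <= 6)%N -> (2 ^ t + k + 1 <= m)%N -> (k + 9 <= m)%N ->
  d.-1 = (2 ^ t.+1 - 1)%N -> (0 < d)%N ->
  (forall i, (i < k)%N -> mxpow B d *m W (2 ^ t + i.+1) (2 ^ t + i.+2) = 0) ->
  check (Lc (t == 3)) k -> (k <= jblocks_ge A d)%N.
Proof.
move=> ht hk hm hm' hd hd0 H0 hc.
apply: leq_trans (ge_lower d k (fun i => W (2 ^ t + i.+1) (2 ^ t + i.+2)) hd0 H0).
rewrite (lower_piv k (Lc (t == 3))) //.
- have h8 : (8 <= 2 ^ t)%N by rewrite -[8%N]/(2 ^ 3)%N leq_pexp2l.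
  lia.
- by move=> i hi; rewrite hd vec_gen //; lia.
Qed.


Lemma pow_zero t : (m <= 2 ^ t)%N -> mxpow B (2 ^ t) = 0.
Proof.
move=> hm; apply: mx_eq0_W => b; have := pr12 b; have := pr2m b.
move: (pr1 b) (pr2 b) => k l h1 h2.
rewrite DW; try lia.
have -> : (k.+1 - 2 ^ t = 0)%N by lia.
have -> : (l.+1 - 2 ^ t = 0)%N by lia.
by rewrite !W0l (WC _ 0) W0l !addr0.
Qed.

Lemma ge_zero t : (m <= 2 ^ t)%N -> jblocks_ge A (2 ^ t).+1 = 0%N.
Proof. by move=> hm; rewrite /jblocks_ge [(2 ^ t).+1.-1]/= pow_zero // mxrank0. Qed.

Lemma zero_vec t x y : (x <= 2 ^ t)%N -> (y <= 2 ^ t)%N -> (x <= m)%N -> (y <= m)%N ->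
  mxpow B (2 ^ t) *m W x y = 0.
Proof.
move=> hx hy hxm hym; rewrite DW //.
have -> : (x - 2 ^ t = 0)%N by lia.
have -> : (y - 2 ^ t = 0)%N by lia.
by rewrite !W0l (WC _ 0) W0l !addr0.
Qed.


Lemma case4 : m = 8%N -> (3 <= jblocks_ge A (2 ^ 3))%N.
Proof.
move=> hm.
have H0 : forall i, (i < 3)%N -> mxpow B (2 ^ 3) *m W (i + 5) (i + 6) = 0.
  move=> i hi; apply: (zero_vec 3); rewrite ?hm; change (2 ^ 3)%N with 8%N; lia.
apply: leq_trans (ge_lower (2 ^ 3) 3 (fun i => W (i + 5) (i + 6)) (expn_gt0 _ _) H0).
rewrite (lower_piv 3 (fun j => T8l (j + 5) (j + 6))).
- by [].
- by rewrite hm.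
- by vm_compute.
- by move=> i hi; rewrite (_ : (2 ^ 3).-1 = 7)%N // T8W // hm; lia.
Qed.

End S.

Theorem lemma4p10 (K : closedFieldType) (hK : (2 \in [pchar K])%N)
  (n q : nat) (hn : (0 < n)%N) (hq : exists k, q = (2 ^ k)%N) (hqn : (2 * n <= q)%N) :
  (forall d : nat, (0 < d)%N ->
     (jblock_mult (ext2 (jordan_unip K (2 * n))) d <= 2)%N) ->
  n \in [:: 1; 2; 3; 5]%N.
Proof.
move=> H.
have hK2 : (2%:R : K) = 0 := pcharf0 hK.
have inl : forall x, (x = 1 \/ x = 2 \/ x = 3 \/ x = 5)%N -> x \in [:: 1; 2; 3; 5]%N.
  by move=> x [->|[->|[->|->]]].
have [n1|n1] := eqVneq n 1; first by rewrite n1.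
set m := (2 * n)%N.
have m1 : (1 < m)%N by rewrite /m; lia.
have /andP[hlo hhi] := up_log_bounds (isT : (1 < 2)%N) m1.
move: (up_log 2 m) hlo hhi => k hlo hhi.
case: k hlo hhi => [|s] hlo hhi; first by move: hhi; rewrite expn0; lia.
rewrite [s.+1.-1]/= in hlo.
have e2 : (2 ^ s.+1 = 2 * 2 ^ s)%N by rewrite expnS.
have Hm := fun d hd => H d hd.
case: (leqP (2 ^ s + 4) m) => hA.
-
  case: (leqP 3 s) => hs.
  + have g1 : (3 <= jblocks_ge (ext2 (jordan_unip K m)) (2 ^ s.+1))%N.
      apply: (@lower_gen K hK2 m s 3 (2 ^ s.+1)) => //; try lia.
      * have : (8 <= 2 ^ s)%N by rewrite -[8%N]/(2 ^ 3)%N leq_pexp2l.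
        lia.
      * move=> i hi; apply: zero_vec => //; try lia.
      * by case: (s == 3); vm_compute.
    have g2 := @ge_zero K hK2 m s.+1 hhi.
    have := H (2 ^ s.+1)%N (expn_gt0 _ _); rewrite /jblock_mult -/m g2 subn0 => h'; by have := leq_trans g1 h'.
  + have p0 : (2 ^ 0 = 1)%N by [].
    have p1 : (2 ^ 1 = 2)%N by [].
    have p2 : (2 ^ 2 = 4)%N by [].
    have p3 : (2 ^ 3 = 8)%N by [].
    have : (s = 0 \/ s = 1 \/ s = 2)%N by lia.
    case=> [e|[e|e]]; subst s; rewrite ?p0 ?p1 ?p2 ?p3 in hA hhi; try lia.
    have hm8 : m = 8%N by lia.
    have g1 := @case4 K hK2 m hm8.
    have g2 := @ge_zero K hK2 m 3 ltac:(by rewrite hm8).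
    have := H (2 ^ 3)%N (expn_gt0 _ _); rewrite /jblock_mult -/m g2 subn0 => h'; by have := leq_trans g1 h'.
-
  case: s hlo hhi hA e2 => [|s] hlo hhi hA e2.
    by move: hlo hhi; rewrite /= /m; lia.
  have e3 : (2 ^ s.+1 = 2 * 2 ^ s)%N by rewrite expnS.
  have hm2 : m = (2 ^ s.+1 + 2)%N by move: hlo hA; rewrite /m e3; lia.
  case: (leqP 3 s) => hs; last first.
    apply: inl; move: hm2; rewrite /m.
    by case: s hs e3 {hlo hhi hA e2} => [|[|[|]]] //= _ _; lia.
  have h8 : (8 <= 2 ^ s)%N by rewrite -[8%N]/(2 ^ 3)%N leq_pexp2l.
  have g1 : (5 <= jblocks_ge (ext2 (jordan_unip K m)) (2 ^ s.+1))%N.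
    apply: (@lower_gen K hK2 m s 5 (2 ^ s.+1)) => //; try lia.
    * move=> i hi; apply: zero_vec => //; try lia.
    * by case: (s == 3); vm_compute.
  have g2 : (jblocks_ge (ext2 (jordan_unip K m)) (2 ^ s.+1).+1 <= 2)%N :=
    @caseB_upper K hK2 m s.+1 (2 ^ s.+1) erefl ltac:(lia) hm2.
  have := H (2 ^ s.+1)%N (expn_gt0 _ _); rewrite /jblock_mult -/m => h'; exfalso; lia.
Qed.
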